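(* Let $\sigma$ be a signature, $\Delta$ a set of $\mathcal{CO}[\sigma]$-formulas, and $\varphi,\psi$ arbitrary formulas over $\sigma$ (of $\mathcal{CO}_{\sqcup}[\sigma]$ or $\mathcal{COD}[\sigma]$). If $\Delta\models^g\varphi\sqcup\psi$, then $\Delta\models^g\varphi$ or $\Delta\models^g\psi$. In particular, if $\models^g\varphi\sqcup\psi$, then $\models^g\varphi$ or $\models^g\psi$.
   Context: A signature $\sigma=(\mathrm{Dom},\mathrm{Ran})$: $\mathrm{Dom}$ nonempty finite set of variables, each with nonempty finite range $\mathrm{Ran}(X)$; $\mathbf X=\mathbf x$ abbreviates $X_1=x_1\wedge\dots\wedge X_n=x_n$ ($\mathbf x\in\prod\mathrm{Ran}(X_i)$), inconsistent if it contains $X=x,X=x'$ with $x\ne x'$. Languages: $\mathcal{CO}[\sigma]$: $\alpha::=X=x\mid\neg\alpha\mid\alpha\wedge\alpha\mid\alpha\vee\alpha\mid\mathbf X=\mathbf x\;\Box\!\!\rightarrow\alpha$; $\mathcal{CO}_{\sqcup}[\sigma]$: $\varphi::=X=x\mid\neg\alpha\mid\varphi\wedge\varphi\mid\varphi\vee\varphi\mid\varphi\sqcup\varphi\mid\mathbf X=\mathbf x\;\Box\!\!\rightarrow\varphi$; $\mathcal{COD}[\sigma]$: $\varphi::=X=x\mid{=}(\mathbf X;Y)\mid\neg\alpha\mid\varphi\wedge\varphi\mid\varphi\vee\varphi\mid\mathbf X=\mathbf x\;\Box\!\!\rightarrow\varphi$ ($\alpha\in\mathcal{CO}[\sigma]$).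 Systems of functions $\mathcal F$: for each $V\in\mathrm{En}(\mathcal F)\subseteq\mathrm{Dom}$ parents $PA^{\mathcal F}_V\subseteq\mathrm{Dom}\setminus\{V\}$ and $\mathcal F_V:\mathrm{Ran}(PA^{\mathcal F}_V)\to\mathrm{Ran}(V)$; $\mathrm{Ex}(\mathcal F)=\mathrm{Dom}\setminus\mathrm{En}(\mathcal F)$; only recursive systems (acyclic parent graph), forming $\mathbb F_\sigma$. An assignment $s$ ($s(X)\in\mathrm{Ran}(X)$) is compatible with $\mathcal F$ if $s(V)=\mathcal F_V(s(PA^{\mathcal F}_V))$ for $V\in\mathrm{En}(\mathcal F)$. A generalized causal team over $\sigma$ is a set $T$ of compatible pairs $(s,\mathcal F)$ with $\mathcal F\in\mathbb F_\sigma$; $T^-=\{s:(s,\mathcal F)\in T\}$. For consistent $\mathbf X=\mathbf x$: $\mathcal F_{\mathbf X=\mathbf x}$ restricts $\mathcal F$ to $\mathrm{En}(\mathcal F)\setminus\mathbf X$; $s^{\mathcal F}_{\mathbf X=\mathbf x}$: $X_i\mapsto x_i$, $V\mapsto s(V)$ on $\mathrm{Ex}(\mathcal F)\setminus\mathbf X$, $V\mapsto\mathcal F_V(s^{\mathcal F}_{\mathbf X=\mathbf x}(PA^{\mathcal F}_V))$ on $\mathrm{En}(\mathcal F)\setminus\mathbf X$; $T_{\mathbf X=\mathbf x}=\{(s^{\mathcal F}_{\mathbf X=\mathbf x},\mathcal F_{\mathbf X=\mathbf x}):(s,\mathcal F)\in T\}$. $\models^g$: $T\models X=x$ iff $s(X)=x$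 for all $s\in T^-$; $T\models{=}(\mathbf X;Y)$ iff for all $s,s'\in T^-$, $s(\mathbf X)=s'(\mathbf X)$ implies $s(Y)=s'(Y)$; $T\models\neg\alpha$ iff $\{(s,\mathcal F)\}\not\models\alpha$ for all $(s,\mathcal F)\in T$; $\wedge$ classical; $T\models\varphi\vee\psi$ iff $T=T_1\cup T_2$ with $T_1\models\varphi$, $T_2\models\psi$; $T\models\varphi\sqcup\psi$ iff $T\models\varphi$ or $T\models\psi$; $T\models\mathbf X=\mathbf x\;\Box\!\!\rightarrow\varphi$ iff $\mathbf X=\mathbf x$ inconsistent or $T_{\mathbf X=\mathbf x}\models\varphi$. $\Delta\models^g\varphi$: every generalized causal team over $\sigma$ satisfying all of $\Delta$ satisfies $\varphi$. *)

(* Defs.v *)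
From mathcomp Require Import all_boot.
Set Implicit Arguments.
Unset Strict Implicit.
Unset Printing Implicit Defensive.

(* Dom = the finite type [var S] (nonempty); Ran X = the finite type [ran X] (nonempty). *)
Record signature := Signature {
  var : finType;
  ran : var -> finType;
  var_ne : 0 < #|var|;
  ran_ne : forall X : var, 0 < #|ran X|
}.

Section Defs.
Variable S : signature.

(* An (atomic) intervention/conjunction  X1 = x1 /\ ... /\ Xn = xn  *)
Definition conj_eq := seq {X : var S & ran X}.

Definition consistent (l : conj_eq) : Prop :=
  forall u v, u \in l -> v \in l -> tag u = tag v -> u = v.

Inductive co : Type :=
| CEq  : forall X : var S, ran X -> co
| CNeg : co -> co
| CAnd : co -> co -> co
| COr  : co -> co -> co
| CCf  : conj_eq -> co -> co.

(* Common syntax of CO_sqcup[sigma] and COD[sigma]: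
   atoms, dependence atoms, negation of CO-formulas, /\, \/, sqcup, counterfactual. *)
Inductive form : Type :=
| FEq  : forall X : var S, ran X -> form
| FDep : seq (var S) -> var S -> form
| FNeg : co -> form
| FAnd : form -> form -> form
| FOr  : form -> form -> form
| FTor : form -> form -> form
| FCf  : conj_eq -> form -> form.

Fixpoint inCOt (f : form) : Prop :=
  match f with
  | FEq _ _ | FNeg _ => True
  | FDep _ _ => False
  | FAnd a b | FOr a b | FTor a b => inCOt a /\ inCOt b
  | FCf _ a => inCOt a
  end.

Fixpoint inCOD (f : form) : Prop :=
  match f with
  | FEq _ _ | FNeg _ | FDep _ _ => True
  | FTor _ _ => False
  | FAnd a b | FOr a b => inCOD a /\ inCOD b
  | FCf _ a => inCOD a
  end.

Definition assign := forall X : var S, ran X.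

(* F_V is given as a function of the whole assignment; [recursive] requires it
   to depend only on the values of the parents PA_V, i.e. F_V : Ran(PA_V) -> Ran(V). *)
Record system := System {
  En : {set var S};
  PA : var S -> {set var S};
  fval : forall V : var S, assign -> ran V
}.

Definition Ex (F : system) : {set var S} := ~: En F.

Definition pedge (F : system) : rel (var S) :=
  fun X V => (V \in En F) && (X \in PA F V).

Definition recursive (F : system) : Prop :=
  [/\ forall V, V \in En F -> V \notin PA F V,
      forall V, V \in En F -> forall s t : assign,
          (forall X, X \in PA F V -> s X = t X) -> fval F V s = fval F V t
    & forall X V, pedge F X V -> ~~ connect (pedge F) V X].

Definition compatible (s : assign) (F : system) : Prop :=
  forall V, V \in En F -> s V = fval F V s.

Definition team := assign * system -> Prop.

Definition gteam (T : team) : Prop :=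
  forall p, T p -> recursive p.2 /\ compatible p.1 p.2.

Definition single (p : assign * system) : team := fun q => q = p.

Definition team_union (T T1 T2 : team) : Prop :=
  forall p, T p <-> (T1 p \/ T2 p).

Definition lookup (l : conj_eq) (V : var S) : option (ran V) :=
  foldr (fun u acc => @untag _ (@ran S) _ acc V (fun y : ran V => Some y) u) None l.

Definition ivars (l : conj_eq) : {set var S} :=
  [set V | has (fun u => tag u == V) l].

Definition sys_int (l : conj_eq) (F : system) : system :=
  System (En F :\: ivars l) (PA F) (fval F).

Definition istep (l : conj_eq) (F : system) (s t : assign) : assign :=
  fun V => match lookup l V with
           | Some x => x
           | None => if V \in En F then fval F V t else s V
           end.

(* s^F_{X=x}: the recursive definition, computed by |Dom| rounds of
   recomputation (enough, since the parent graph is acyclic) *)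
Definition ass_int (l : conj_eq) (F : system) (s : assign) : assign :=
  iter #|var S| (istep l F s) s.

Definition team_int (l : conj_eq) (T : team) : team :=
  fun q => exists s F, T (s, F) /\ q = (ass_int l F s, sys_int l F).

Fixpoint sat_co (a : co) (T : team) {struct a} : Prop :=
  match a with
  | CEq X x => forall p, T p -> p.1 X = x
  | CNeg b => forall p, T p -> ~ sat_co b (single p)
  | CAnd b c => sat_co b T /\ sat_co c T
  | COr b c => exists T1 T2, team_union T T1 T2 /\ sat_co b T1 /\ sat_co c T2
  | CCf l b => ~ consistent l \/ sat_co b (team_int l T)
  end.

Fixpoint sat (f : form) (T : team) {struct f} : Prop :=
  match f with
  | FEq X x => forall p, T p -> p.1 X = x
  | FDep Xs Y => forall p q, T p -> T q ->
        (forall X, X \in Xs -> p.1 X = q.1 X) -> p.1 Y = q.1 Y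
  | FNeg b => forall p, T p -> ~ sat_co b (single p)
  | FAnd b c => sat b T /\ sat c T
  | FOr b c => exists T1 T2, team_union T T1 T2 /\ sat b T1 /\ sat c T2
  | FTor b c => sat b T \/ sat c T
  | FCf l b => ~ consistent l \/ sat b (team_int l T)
  end.

Definition gentails (D : co -> Prop) (f : form) : Prop :=
  forall T, gteam T -> (forall a, D a -> sat_co a T) -> sat f T.

End Defs.

(* Main.v *)
Require Import Defs.
From mathcomp Require Import all_boot.
From Stdlib Require Import Classical.

Lemma co_flat (S : signature) (a : co S) : forall T : team S,
  sat_co a T <-> (forall p, T p -> sat_co a (single p)).
Proof.
elim: a => [X x|b IH|b IHb c IHc|b IHb c IHc|l b IH] T /=.
- split.
  + by move=> H p Tp q ->; apply: H.
  + by move=> H p Tp; apply: (H p Tp p).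
- split.
  + by move=> H p Tp q ->; apply: H.
  + by move=> H p Tp; apply: (H p Tp p).
- rewrite IHb IHc; split.
  + move=> [H1 H2] p Tp; split; [rewrite IHb|rewrite IHc] => q ->; auto.
  + move=> H; split => p Tp; have [h1 h2] := H p Tp.
    * by move: h1; rewrite IHb; apply.
    * by move: h2; rewrite IHc; apply.
- split.
  + move=> [T1 [T2 [U [H1 H2]]]] p Tp.
    have [t1|t2] := (U p).1 Tp.
    * exists (single p), (fun _ => False); split; [|split].
      -- by move=> q; split; [left|case].
      -- by apply: ((IHb T1).1 H1 p t1).
      -- by apply/IHc.
    * exists (fun _ => False), (single p); split; [|split].
      -- by move=> q; split; [right|case].
      -- by apply/IHb.
      -- by apply: ((IHc T2).1 H2 p t2).
  + move=> H.
    exists (fun q => T q /\ sat_co b (single q)), (fun q => T q /\ sat_co c (single q)).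
    split; [|split].
    * move=> q; split; last by case=> -[].
      move=> Tq; have [U1 [U2 [U [s1 s2]]]] := H q Tq.
      have [u1|u2] := (U q).1 (erefl q).
      -- by left; split=> //; apply: ((IHb U1).1 s1 q u1).
      -- by right; split=> //; apply: ((IHc U2).1 s2 q u2).
    * by apply/IHb => q [].
    * by apply/IHc => q [].
- split.
  + move=> [nc|Hb] p Tp; first by left.
    right; apply/IH => q [s [F [E ->]]].
    move: Hb; rewrite IH; apply; exists s, F; split=> //; by rewrite E.
  + move=> H; case: (classic (consistent l)) => cl; last by left.
    right; apply/IH => q [s [F [Ts ->]]].
    case: (H (s, F) Ts) => // Hb.
    by move: Hb; rewrite IH; apply; exists s, F.
Qed.

Lemma form_down (S : signature) (f : form S) : forall T T' : team S,
  (forall p, T' p -> T p) -> sat f T -> sat f T'.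
Proof.
elim: f => [X x|Xs Y|b|b IHb c IHc|b IHb c IHc|b IHb c IHc|l b IH] T T' sub /=.
- by move=> H p /sub; apply: H.
- by move=> H p q /sub Tp /sub Tq; apply: H.
- by move=> H p /sub; apply: H.
- by move=> [h1 h2]; split; [apply: (IHb T)|apply: (IHc T)].
- move=> [T1 [T2 [U [H1 H2]]]].
  exists (fun p => T' p /\ T1 p), (fun p => T' p /\ T2 p); split; [|split].
  + move=> p; split; last by case=> -[].
    move=> t'; have [u|u] := (U p).1 (sub p t'); [left|right]; by [].
  + by apply: (IHb T1) H1 => p [].
  + by apply: (IHc T2) H2 => p [].
- by case=> H; [left; apply: (IHb T)|right; apply: (IHc T)].
- case=> H; [by left|right]; apply: (IH _ _ _ H).
  by move=> q [s [F [Ts ->]]]; exists s, F; split=> //; apply: sub.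
Qed.

Theorem theorem3p8 (S : signature) (D : co S -> Prop) (phi psi : form S) :
  ((inCOt phi /\ inCOt psi) \/ (inCOD phi /\ inCOD psi)) ->
  gentails D (FTor phi psi) -> gentails D phi \/ gentails D psi.
Proof.
move=> _ H.
apply: NNPP => Hn.
move: Hn => /not_or_and [H1 H2].
have [T1 H1'] := not_all_ex_not _ _ H1.
have [g1 H1''] := imply_to_and _ _ H1'.
have [d1 n1] := imply_to_and _ _ H1''.
have [T2 H2'] := not_all_ex_not _ _ H2.
have [g2 H2''] := imply_to_and _ _ H2'.
have [d2 n2] := imply_to_and _ _ H2''.
pose T := fun p => T1 p \/ T2 p.
have gT : gteam T by move=> p [t|t]; [apply: g1|apply: g2].
have dT : forall a, D a -> sat_co a T.
  move=> a Da; apply/co_flat => p [t|t].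
  - by move: (d1 a Da); rewrite co_flat; apply.
  - by move: (d2 a Da); rewrite co_flat; apply.
case: (H T gT dT) => Hs.
- by apply: n1; apply: (@form_down _ _ T) Hs => p t; left.
- by apply: n2; apply: (@form_down _ _ T) Hs => p t; right.
Qed.
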